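(* Let $V\subseteq\mathcal V$ be finite, $\mathcal E\in\mathit{DProg}(V)$, $W\subseteq\mathcal V$ finite and $P,Q$ projectors on $\mathcal H_W$. Then: (1) $sp^p.\mathcal E.(wlp^p.\mathcal E.Q)\sqsubseteq Q$ and $P\sqsubseteq wlp^p.\mathcal E.(sp^p.\mathcal E.P)$; (2) $wp^p.\mathcal E.Q=wlp^p.\mathcal E.Q\wedge wp^p.\mathcal E.I_W$; (3) $sp^p.\mathcal E.(wp^p.\mathcal E.Q)\sqsubseteq Q$, and if $P\sqsubseteq wp^p.\mathcal E.I_W$ then $P\sqsubseteq wp^p.\mathcal E.(sp^p.\mathcal E.P)$.
   Context: $\mathcal V$ is a countably infinite set of qubit variables; $\mathcal H_V=\bigotimes_{q\in V}\mathcal H_q$. $\mathcal D(\mathcal H)$: partial density operators; projectors are identified with their image subspaces, ordered by inclusion $\sqsubseteq$, with $\wedge$ = intersection. $\mathit{DProg}(V)$: completely positive trace-nonincreasing super-operators on $\mathcal L(\mathcal H_V)$. Convention: operators and super-operators are implicitly extended to $\mathcal H_{V\cup W}$ (and larger systems) by tensoring with identities; all projectors are regarded on $\mathcal H_{V\cup W}$. For projectors $P,Q$: $\mathcal E\models_{tot}(P,Q)$ iff for all finite $X\supseteq V\cup W$ and $\rho\in\mathcal D(\mathcal H_X)$, ${\rm tr}(P\rho)\le{\rm tr}(Q\mathcal E(\rho))$; $\mathcal E\models_{par}(P,Q)$ iff for all such $X,\rho$, ${\rm tr}(P\rho)\le{\rm tr}(Q\mathcal E(\rho))+{\rm tr}(\rho)-{\rm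 tr}(\mathcal E(\rho))$. $wp^p.\mathcal E.Q$ is the largest projector $P$ with $\mathcal E\models_{tot}(P,Q)$; $wlp^p.\mathcal E.Q$ the largest projector $P$ with $\mathcal E\models_{par}(P,Q)$; $sp^p.\mathcal E.Q$ the smallest projector $R$ with $\mathcal E\models_{par}(Q,R)$. *)

(* Defs.v *)
From HB Require Import structures.
From mathcomp Require Import all_boot all_order all_algebra.
From mathcomp Require Import finmap.
From mathcomp Require Import complex.
From mathcomp Require Import reals.
From Stdlib Require Import ClassicalEpsilon.

Set Implicit Arguments.
Unset Strict Implicit.
Unset Printing Implicit Defensive.

Import Order.TTheory GRing.Theory Num.Theory.
Local Open Scope fset_scope.
Local Open Scope ring_scope.

Section Quantum.
Variable R : realType.
Notation C := R[i].

(* Qubit variables are natural numbers; a finite set of variables X : {fset nat}.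
   The computational basis of H_X = (C^2)^{(x) X} is indexed by assignments X -> bool. *)
Definition basis (X : {fset nat}) := {ffun X -> bool}.

Definition op (X : {fset nat}) := basis X -> basis X -> C.

Definition tr X (A : op X) : C := \sum_(a : basis X) A a a.
Definition mul X (A B : op X) : op X := fun a b => \sum_(c : basis X) A a c * B c b.
Definition app X (A : op X) (v : basis X -> C) : basis X -> C :=
  fun a => \sum_(b : basis X) A a b * v b.
Definition idop X : op X := fun a b => if a == b then 1 else 0.

Definition psd X (A : op X) : Prop :=
  forall v : basis X -> C, 0 <= \sum_(a : basis X) \sum_(b : basis X) (v a)^* * A a b * v b.
Definition pdo X (A : op X) : Prop := psd A /\ tr A <= 1.
Definition projector X (P : op X) : Prop :=
  (forall a b, P a b = (P b a)^*) /\ (forall a b, mul P P a b = P a b).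
Definition inrange X (P : op X) (v : basis X -> C) : Prop :=
  exists w : basis X -> C, forall a, v a = app P w a.

(* restriction of an assignment on T to S (meaningful when S is a subset of T) *)
Definition restr (S T : {fset nat}) (a : basis T) : basis S :=
  [ffun s : S => if (insub (fsval s) : option T) is Some t then a t else false].
Definition glue (S T : {fset nat}) (u : basis S) (a : basis T) : basis T :=
  [ffun t : T => if (insub (fsval t) : option S) is Some s then u s else a t].
Definition agree_out (S T : {fset nat}) (a b : basis T) : bool :=
  [forall t : T, (fsval t \notin S) ==> (a t == b t)].

(* implicit extension A (x) I of an operator on H_S to H_T (for S a subset of T) *)
Definition extO (S T : {fset nat}) (A : op S) : op T :=
  fun a b => if agree_out S a b then A (restr S a) (restr S b) else 0.

(* super-operators on L(H_V) and their implicit extension E (x) id to H_X *)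
Definition superop (V : {fset nat}) := op V -> op V.
Definition extS (V X : {fset nat}) (E : superop V) (rho : op X) : op X :=
  fun a b => E (fun u v => rho (glue u a) (glue v b)) (restr V a) (restr V b).

(* DProg(V): completely positive, trace-nonincreasing super-operators.
   Complete positivity is expressed as positivity of E (x) id on every
   H_X with X a finite superset of V (qubit ancillas). *)
Definition DProg (V : {fset nat}) (E : superop V) : Prop :=
  [/\ (forall (c : C) (A B : op V) a b,
         E (fun i j => c * A i j + B i j) a b = c * E A a b + E B a b),
      (forall X : {fset nat}, (V `<=` X)%fset -> forall rho : op X, psd rho -> psd (extS E rho))
    & (forall rho : op V, psd rho -> tr (E rho) <= tr rho)].

(* correctness formulas; all operators are regarded on a common finite X
   containing V and the spaces of the pre- and postcondition *)
Definition sat_tot (V S T : {fset nat}) (E : superop V) (P : op S) (Q : op T) : Prop :=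
  forall X : {fset nat}, (V `|` S `|` T `<=` X)%fset -> forall rho : op X, pdo rho ->
    tr (mul (@extO S X P) rho) <= tr (mul (@extO T X Q) (@extS V X E rho)).

Definition sat_par (V S T : {fset nat}) (E : superop V) (P : op S) (Q : op T) : Prop :=
  forall X : {fset nat}, (V `|` S `|` T `<=` X)%fset -> forall rho : op X, pdo rho ->
    tr (mul (@extO S X P) rho)
      <= tr (mul (@extO T X Q) (@extS V X E rho)) + tr rho - tr (@extS V X E rho).

(* projectors are identified with their image subspaces; the order is inclusion,
   comparing projectors on different spaces after extending both to S `|` T *)
Definition sqle (S T : {fset nat}) (A : op S) (B : op T) : Prop :=
  forall v : basis (S `|` T)%fset -> C,
    inrange (@extO S (S `|` T)%fset A) v -> inrange (@extO T (S `|` T)%fset B) v.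

Definition zeroop X : op X := fun _ _ => 0.

Definition wp (V W : {fset nat}) (E : superop V) (Q : op W) : op (V `|` W)%fset :=
  epsilon (inhabits (@zeroop (V `|` W)%fset))
    (fun P => projector P /\ sat_tot E P Q /\
       forall P' : op (V `|` W)%fset, projector P' -> sat_tot E P' Q -> sqle P' P).

Definition wlp (V W : {fset nat}) (E : superop V) (Q : op W) : op (V `|` W)%fset :=
  epsilon (inhabits (@zeroop (V `|` W)%fset))
    (fun P => projector P /\ sat_par E P Q /\
       forall P' : op (V `|` W)%fset, projector P' -> sat_par E P' Q -> sqle P' P).

Definition sp (V W : {fset nat}) (E : superop V) (Q : op W) : op (V `|` W)%fset :=
  epsilon (inhabits (@zeroop (V `|` W)%fset))
    (fun R' => projector R' /\ sat_par E Q R' /\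
       forall R'' : op (V `|` W)%fset, projector R'' -> sat_par E Q R'' -> sqle R' R'').

End Quantum.

(* Main.v *)
Require Import Defs.
From mathcomp Require Import all_boot all_order all_algebra.
From mathcomp Require Import finmap complex reals.
From mathcomp Require Import ring lra.
From Stdlib Require Import Classical FunctionalExtensionality ClassicalEpsilon.
Set Implicit Arguments.
Unset Strict Implicit.
Unset Printing Implicit Defensive.
Import Order.TTheory GRing.Theory Num.Theory.
Local Open Scope fset_scope.
Local Open Scope ring_scope.

Ltac fsub := let x := fresh "x" in apply/fsubsetP => x; rewrite ?in_fsetU;
  repeat match goal with |- context [x \in ?A] => case: (x \in A) end; by [].
Ltac fseq := apply/eqP; rewrite eqEfsubset; apply/andP; split; fsub.

Lemma insub_in (T : {fset nat}) x (h : x \in T) : (insub x : option T) = Some [` h].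
Proof. case: insubP => [t _ e|]; last by rewrite h. by congr Some; apply: val_inj. Qed.
Lemma insub_out (T : {fset nat}) x (h : x \notin T) : (insub x : option T) = None.
Proof. case: insubP => [t Ht e|//]. by rewrite -e fsvalP in h. Qed.

Ltac insub_case S t :=
  let h := fresh "h" in
  case: (boolP (fsval t \in S)) => h;
  [rewrite ?(insub_in h) | rewrite ?(insub_out h)].

Lemma restr_glue (S T : {fset nat}) (u : basis S) (a : basis T) :
  (S `<=` T) -> restr S (glue u a) = u.
Proof.
move=> ST; apply/ffunP => s; rewrite !ffunE.
have sT : fsval s \in T := fsubsetP ST _ (fsvalP s).
rewrite (insub_in sT) ffunE /= (insub_in (fsvalP s)).
by congr (u _); apply: val_inj.
Qed.

Lemma glue_restr (S T : {fset nat}) (a : basis T) : glue (restr S a) a = a.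
Proof.
apply/ffunP => t; rewrite !ffunE.
insub_case S t => //; rewrite ffunE /= (insub_in (fsvalP t)).
by congr (a _); apply: val_inj.
Qed.

Lemma glue_glue (S T : {fset nat}) (u v : basis S) (a : basis T) :
  glue u (glue v a) = glue u a.
Proof.
apply/ffunP => t; rewrite !ffunE.
insub_case S t => //; by rewrite ffunE (insub_out h).
Qed.

Lemma glue_same (S : {fset nat}) (u a : basis S) : glue u a = u.
Proof.
apply/ffunP => t; rewrite !ffunE (insub_in (fsvalP t)).
by congr (u _); apply: val_inj.
Qed.

Lemma restr_same (S : {fset nat}) (a : basis S) : restr S a = a.
Proof. by have := glue_restr S a; rewrite glue_same. Qed.

Lemma glue_glue2 (V Z X : {fset nat}) (u : basis V) (a : basis Z) (c : basis X) :
  (V `<=` Z) -> glue u (glue a c) = glue (glue u a) c.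
Proof.
move=> VZ; apply/ffunP => t; rewrite !ffunE.
insub_case V t.
  have tZ : fsval t \in Z by rewrite (fsubsetP VZ _ h).
  rewrite (insub_in tZ) ffunE /= (insub_in h).
  by congr (u _); apply: val_inj.
insub_case Z t => //.
by rewrite ffunE /= (insub_out h).
Qed.

Lemma restr_glue2 (S Z X : {fset nat}) (a : basis Z) (c : basis X) :
  (S `<=` Z) -> (Z `<=` X) -> restr S (glue a c) = restr S a.
Proof.
move=> SZ ZX; apply/ffunP => s; rewrite !ffunE.
have sZ : fsval s \in Z := fsubsetP SZ _ (fsvalP s).
have sX : fsval s \in X := fsubsetP ZX _ sZ.
by rewrite (insub_in sX) (insub_in sZ) /= ffunE (insub_in sZ).
Qed.

Lemma restr_restr (S S' X : {fset nat}) (a : basis X) :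
  (S `<=` S') -> (S' `<=` X) -> restr S (restr S' a) = restr S a.
Proof.
move=> SS' S'X; apply/ffunP => s; rewrite !ffunE.
have sS' : fsval s \in S' := fsubsetP SS' _ (fsvalP s).
have sX : fsval s \in X := fsubsetP S'X _ sS'.
by rewrite (insub_in sS') (insub_in sX) /= ffunE (insub_in sX).
Qed.

Definition zb (Z : {fset nat}) : basis Z := [ffun _ => false].
Definition canon (Z X : {fset nat}) (a : basis X) : basis X := glue (zb Z) a.

Lemma canon_glue (Z X : {fset nat}) (a : basis Z) (c : basis X) :
  canon Z (glue a c) = canon Z c.
Proof. exact: glue_glue. Qed.

Lemma canon_idem (Z X : {fset nat}) (c : basis X) : canon Z (canon Z c) = canon Z c.
Proof. exact: canon_glue. Qed.

Lemma canon_in (Z X : {fset nat}) (c : basis X) t :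
  canon Z c = c -> fsval t \in Z -> c t = false.
Proof.
move=> <- h; by rewrite ffunE (insub_in h) ffunE.
Qed.

Lemma agree_glue (S Z X : {fset nat}) (a b : basis Z) (c c' : basis X) :
  (S `<=` Z) -> (Z `<=` X) -> canon Z c = c -> canon Z c' = c' ->
  agree_out S (glue a c) (glue b c') = (c == c') && agree_out S a b.
Proof.
move=> SZ ZX hc hc'.
apply/idP/idP.
- move=> /forallP H; apply/andP; split.
    apply/eqP/ffunP => t.
    case: (boolP (fsval t \in Z)) => h.
      by rewrite (canon_in hc h) (canon_in hc' h).
    have hS : fsval t \notin S by apply: contra h; apply: (fsubsetP SZ).
    have := H t; rewrite hS /= !ffunE (insub_out h) => /eqP; done.
  apply/forallP => t; apply/implyP => hS.
  have tX : fsval t \in X := fsubsetP ZX _ (fsvalP t).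
  have := H [` tX]; rewrite /= hS /= !ffunE (insub_in (fsvalP t)).
  have -> : [` fsvalP t] = t by apply: val_inj.
  done.
- case/andP => /eqP <- /forallP H; apply/forallP => t; apply/implyP => hS.
  rewrite !ffunE; case: (boolP (fsval t \in Z)) => h.
    by rewrite (insub_in h); have := H [` h]; rewrite /= hS.
  by rewrite (insub_out h).
Qed.

Notation EO T A := (@extO _ _ T A).

Lemma extO_glue (R : realType) (S Z X : {fset nat}) (A : op R S) (a b : basis Z) (c c' : basis X) :
  (S `<=` Z) -> (Z `<=` X) -> canon Z c = c -> canon Z c' = c' ->
  EO X A (glue a c) (glue b c') = if c == c' then EO Z A a b else 0.
Proof.
move=> SZ ZX hc hc'; rewrite /extO (agree_glue _ _ SZ ZX hc hc').
rewrite !(restr_glue2 _ _ SZ ZX).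
by case: (c == c').
Qed.

Lemma sum_split (M : nmodType) (Z X : {fset nat}) (F : basis X -> M) :
  (Z `<=` X) ->
  \sum_(a : basis X) F a = \sum_(c : basis X | canon Z c == c) \sum_(a' : basis Z) F (glue a' c).
Proof.
move=> ZX.
rewrite (partition_big (fun a => canon Z a) (fun c => canon Z c == c)) /=; last first.
  by move=> a _; rewrite canon_idem.
apply: eq_bigr => c /eqP hc.
rewrite (reindex_onto (fun a' => glue a' c) (fun a => restr Z a)) /=; last first.
  by move=> a /eqP <-; rewrite /canon glue_glue glue_restr.
apply: eq_bigl => a'.
by rewrite canon_glue hc eqxx restr_glue // eqxx.
Qed.

Section Ops.
Variable R : realType.
Local Notation C := R[i].
Variable X : {fset nat}.
Local Notation B := (basis X).
Local Notation OP := (op R X).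
Local Notation mul := (@Defs.mul R X).
Local Notation tr := (@Defs.tr R X).
Local Notation app := (@Defs.app R X).
Implicit Types (A G M P Q : OP) (u v w : B -> C).

Definition ev (c : B) : B -> C := fun x => (x == c)%:R.
Definition dot u v : C := \sum_a (u a)^* * v a.
Definition outer u w : OP := fun a b => u a * (w b)^*.
Definition qf A v : C := \sum_a \sum_b (v a)^* * A a b * v b.
Definition sq A u w : C := \sum_a \sum_b (u a)^* * A a b * w b.
Definition opB A A' : OP := fun a b => A a b - A' a b.
Definition op0 : OP := fun _ _ => 0.
Definition herm A := forall a b, A a b = (A b a)^*.
Definition compl P : OP := opB (@idop R X) P.
Definition pcol P (c : B) : B -> C := fun a => P a c.

Lemma funext2 A A' : (forall a b, A a b = A' a b) -> A = A'.
Proof. move=> h; apply: functional_extensionality => a; apply: functional_extensionality => b; exact: h. Qed.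
Lemma funext1 u v : (forall a, u a = v a) -> u = v.
Proof. move=> h; apply: functional_extensionality => a; exact: h. Qed.

Lemma mulA A A' A'' : mul A (mul A' A'') = mul (mul A A') A''.
Proof.
apply: funext2 => a b; rewrite /mul.
under eq_bigr => c _ do rewrite big_distrr /=.
rewrite exchange_big /=; apply: eq_bigr => d _.
rewrite big_distrl /=; apply: eq_bigr => c _; by rewrite mulrA.
Qed.

Lemma trC A A' : tr (mul A A') = tr (mul A' A).
Proof.
rewrite /tr /mul exchange_big /=; apply: eq_bigr => a _; apply: eq_bigr => b _.
by rewrite mulrC.
Qed.

Lemma mul_idl A : mul (@idop R X) A = A.
Proof.
apply: funext2 => a b; rewrite /mul /idop (bigD1 a) //= eqxx mul1r big1 ?addr0 //.
by move=> c /= /negbTE; rewrite eq_sym => ->; rewrite mul0r.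
Qed.

Lemma mul_idr A : mul A (@idop R X) = A.
Proof.
apply: funext2 => a b; rewrite /mul /idop (bigD1 b) //= eqxx mulr1 big1 ?addr0 //.
by move=> c /= /negbTE ->; rewrite mulr0.
Qed.

Lemma mulBl A A' A'' : mul (opB A A') A'' = opB (mul A A'') (mul A' A'').
Proof.
apply: funext2 => a b; rewrite /mul /opB -sumrB; apply: eq_bigr => c _; by rewrite mulrBl.
Qed.

Lemma mulBr A A' A'' : mul A'' (opB A A') = opB (mul A'' A) (mul A'' A').
Proof.
apply: funext2 => a b; rewrite /mul /opB -sumrB; apply: eq_bigr => c _; by rewrite mulrBr.
Qed.

Lemma trB A A' : tr (opB A A') = tr A - tr A'.
Proof. by rewrite /tr /opB sumrB. Qed.

Lemma app_mul A A' v : app (mul A A') v = app A (app A' v).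
Proof.
apply: funext1 => a; rewrite /app /mul.
under eq_bigr => b _ do rewrite big_distrl /=.
rewrite exchange_big /=; apply: eq_bigr => c _.
rewrite big_distrr /=; apply: eq_bigr => b _; by rewrite mulrA.
Qed.

Lemma inrangeP P v : mul P P = P -> (inrange P v <-> app P v = v).
Proof.
move=> PP; split.
  case=> w hw; have -> : v = app P w by apply: funext1.
  by rewrite -app_mul PP.
by move=> h; exists v => a; rewrite h.
Qed.

Lemma dot_herm A u w : herm A -> dot u (app A w) = dot (app A u) w.
Proof.
move=> hA; rewrite /dot /app.
under eq_bigr => a _ do rewrite big_distrr /=.
rewrite exchange_big /=; apply: eq_bigr => b _.
rewrite rmorph_sum big_distrl /=; apply: eq_bigr => a _.
by rewrite rmorphM /= hA; ring.
Qed.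

Lemma sum_evr (F : B -> C) c : \sum_b F b * ev c b = F c.
Proof.
rewrite (bigD1 c) //= /ev eqxx mulr1 big1 ?addr0 //.
by move=> b /negbTE ->; rewrite mulr0.
Qed.

Lemma sum_evl (F : B -> C) c : \sum_b (ev c b)^* * F b = F c.
Proof.
rewrite (bigD1 c) //= /ev eqxx conjC1 mul1r big1 ?addr0 //.
by move=> b /negbTE ->; rewrite conjC0 mul0r.
Qed.

Lemma qf_ev A c : qf A (ev c) = A c c.
Proof.
rewrite /qf.
under eq_bigr => a _ do rewrite sum_evr.
by rewrite sum_evl.
Qed.

Lemma tr_qf A : tr A = \sum_c qf A (ev c).
Proof. by apply: eq_bigr => c _; rewrite qf_ev. Qed.

Lemma tr_psd_ge0 A : psd A -> 0 <= tr A.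
Proof. by move=> hA; rewrite tr_qf; apply: sumr_ge0 => c _; apply: hA. Qed.

Lemma qf_conj A M v : herm A -> qf (mul A (mul M A)) v = qf M (app A v).
Proof.
move=> hA; rewrite /qf /mul /app.
transitivity (\sum_a \sum_c \sum_d \sum_b ((v a)^* * A a c) * M c d * (A d b * v b)).
  apply: eq_bigr => a _.
  transitivity (\sum_b \sum_c \sum_d ((v a)^* * A a c) * M c d * (A d b * v b)).
    apply: eq_bigr => b _.
    rewrite big_distrr big_distrl /=; apply: eq_bigr => c _.
    rewrite big_distrr /= big_distrr big_distrl /=; apply: eq_bigr => d _.
    ring.
  rewrite exchange_big /=; apply: eq_bigr => c _; by rewrite exchange_big.
rewrite exchange_big /=; apply: eq_bigr => c _.
rewrite exchange_big /=; apply: eq_bigr => d _.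
rewrite rmorph_sum !big_distrl /=; apply: eq_bigr => a _.
rewrite big_distrr /=; apply: eq_bigr => b _.
rewrite rmorphM /= (hA c a) conjCK; ring.
Qed.

Lemma psd_conj A M : herm A -> psd M -> psd (mul A (mul M A)).
Proof. move=> hA hM v; rewrite -/(qf _ _) qf_conj //; exact: hM. Qed.

Lemma herm_compl P : herm P -> herm (compl P).
Proof.
move=> hP a b; rewrite /compl /opB /idop rmorphB /= -hP eq_sym.
by case: (b == a); rewrite ?conjC1 ?conjC0.
Qed.

Lemma compl_proj P : projector P -> projector (compl P).
Proof.
case=> hP PP; split; first exact: herm_compl.
move=> a b; rewrite /compl mulBl !mulBr mul_idl mul_idr.
have -> : mul P P = P by apply: funext2.
by rewrite /opB /= mul_idl subrr subr0.
Qed.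

Lemma projPP P : projector P -> mul P P = P.
Proof. by case=> _ h; apply: funext2. Qed.

Lemma trP_qf P M : projector P -> tr (mul P M) = \sum_c qf M (app P (ev c)).
Proof.
move=> hP; have PP := projPP hP.
rewrite -{1}PP -mulA trC -mulA tr_qf; apply: eq_bigr => c _.
by rewrite qf_conj //; case: hP.
Qed.

Lemma trP_ge0 P M : projector P -> psd M -> 0 <= tr (mul P M).
Proof. by move=> hP hM; rewrite trP_qf //; apply: sumr_ge0 => c _; apply: hM. Qed.

Lemma trP_le P M : projector P -> psd M -> tr (mul P M) <= tr M.
Proof.
move=> hP hM; rewrite -subr_ge0.
have -> : tr M - tr (mul P M) = tr (mul (compl P) M).
  by rewrite /compl mulBl trB mul_idl.
exact: trP_ge0 (compl_proj hP) hM.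
Qed.

Lemma qf_outer u v : qf (outer u u) v = dot v u * (dot v u)^*.
Proof.
rewrite /qf /outer /dot rmorph_sum big_distrl /=; apply: eq_bigr => a _.
rewrite big_distrr /=; apply: eq_bigr => b _.
by rewrite rmorphM /= conjCK; ring.
Qed.

Lemma psd_outer u : psd (outer u u).
Proof. move=> v; rewrite -/(qf _ _) qf_outer; exact: mul_conjC_ge0. Qed.

Lemma tr_mul_outer A u : tr (mul A (outer u u)) = dot u (app A u).
Proof.
rewrite /tr /mul /outer /dot /app; apply: eq_bigr => a _.
rewrite big_distrr /=; apply: eq_bigr => b _; ring.
Qed.

Lemma tr_outer u : tr (outer u u) = dot u u.
Proof. rewrite -{1}(mul_idl (outer u u)) tr_mul_outer; congr dot; apply: funext1 => a.
rewrite /app /idop (bigD1 a) //= eqxx mul1r big1 ?addr0 //.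
by move=> b /= /negbTE; rewrite eq_sym => ->; rewrite mul0r.
Qed.

Lemma dot_ge0 u : 0 <= dot u u.
Proof. by apply: sumr_ge0 => a _; rewrite mulrC mul_conjC_ge0. Qed.

Lemma dot_eq0 u : dot u u = 0 -> u = (fun _ => 0).
Proof.
move=> h; apply: funext1 => a.
have H : forall b, true -> 0 <= (u b)^* * u b by move=> b _; rewrite mulrC mul_conjC_ge0.
have := psumr_eq0P H h isT (i:=a).
by move/eqP; rewrite mulrC mul_conjC_eq0 => /eqP.
Qed.

Lemma qf_dot A v : qf A v = dot v (app A v).
Proof.
rewrite /qf /dot /app; apply: eq_bigr => a _; rewrite big_distrr /=.
by apply: eq_bigr => b _; rewrite mulrA.
Qed.

Lemma qf_add A u w t :
  qf A (fun a => u a + t * w a) =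
  qf A u + t * sq A u w + t^* * sq A w u + t * t^* * qf A w.
Proof.
have E : forall a b, (u a + t * w a)^* * A a b * (u b + t * w b) =
  (u a)^* * A a b * u b + t * ((u a)^* * A a b * w b) + t^* * ((w a)^* * A a b * u b)
  + t * t^* * ((w a)^* * A a b * w b).
  by move=> a b; rewrite rmorphD rmorphM /=; ring.
rewrite /qf /sq.
under eq_bigr => a _ do under eq_bigr => b _ do rewrite E.
under eq_bigr => a _ do rewrite !big_split /= -!big_distrr /=.
by rewrite !big_split /= -!big_distrr /=.
Qed.

Lemma real_sq_ge0 (c : C) : c \is Num.real -> 0 <= c * c.
Proof. by move=> /conj_Creal h; rewrite -{2}h mul_conjC_ge0. Qed.

Lemma scalar_cs0 (c d : C) : 0 <= d ->
  (forall s : C, s \is Num.real -> 0 <= s * c + s * s * d) -> c = 0.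
Proof.
move=> d0 H.
have h1 := H 1 (rpred1 _); rewrite !mul1r in h1.
have cR : c \is Num.real.
  have -> : c = (c + d) - d by ring.
  by apply: rpredB; apply: ger0_real.
have d1 : 0 < d + 1 by apply: ltr_wpDl d0 ltr01.
have d1n : d + 1 != 0 by rewrite gt_eqF.
have d1R : d + 1 \is Num.real by apply: ger0_real; apply: ltW.
set s := - c / (d + 1).
have sR : s \is Num.real by rewrite /s rpredM ?rpredN ?rpredV.
have := H s sR.
have -> : s * c + s * s * d = - (c * c / ((d + 1) * (d + 1))).
  by rewrite /s; field.
rewrite oppr_ge0 => hle.
have hge : 0 <= c * c / ((d + 1) * (d + 1)).
  by apply: divr_ge0; [exact: real_sq_ge0 | apply: mulr_ge0; apply: ltW].
have : c * c / ((d + 1) * (d + 1)) = 0 by apply: le_anti; rewrite hle hge.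
move/eqP; rewrite mulf_eq0 invr_eq0 !mulf_eq0 (negbTE d1n) !orbb orbF.
by move/eqP.
Qed.

Lemma scalar_cs (b g d : C) : 0 <= d ->
  (forall t : C, 0 <= t * b + t^* * g + t * t^* * d) -> b = 0 /\ g = 0.
Proof.
move=> d0 H.
have e1 : b + g = 0.
  apply: (scalar_cs0 d0) => s sR.
  have := H s; rewrite (conj_Creal sR).
  by have -> : s * b + s * g + s * s * d = s * (b + g) + s * s * d by ring.
have e2 : 'i * (b - g) = 0.
  apply: (scalar_cs0 d0) => s sR.
  have := H ('i * s); rewrite rmorphM /= (conj_Creal sR) conjCi.
  have -> : 'i * s * b + - 'i * s * g + 'i * s * (- 'i * s) * d
     = s * ('i * (b - g)) + s * s * d * (- ('i * 'i)) by ring.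
  have hi : 'i * 'i = -1 :> C by rewrite -expr2 sqrCi.
  by rewrite hi opprK mulr1.
move: e2 => /eqP; rewrite mulf_eq0 (negbTE (neq0Ci _)) /= subr_eq0 => /eqP bg.
move: e1; rewrite bg -mulr2n => /eqP; rewrite mulrn_eq0 /= => /eqP ->.
by split.
Qed.

Lemma psd_ker A u : psd A -> qf A u = 0 ->
  (forall w, sq A w u = 0) /\ (forall w, sq A u w = 0).
Proof.
move=> hA hu.
have H : forall w, sq A u w = 0 /\ sq A w u = 0.
  move=> w; apply: scalar_cs (hA w) _ => t.
  by have := hA (fun a => u a + t * w a); rewrite -/(qf _ _) qf_add hu add0r.
by split => w; case: (H w).
Qed.

Lemma sq_evl A u x : sq A (ev x) u = app A u x.
Proof.
rewrite /sq /app.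
transitivity (\sum_a (ev x a)^* * (\sum_b A a b * u b)).
  apply: eq_bigr => a _; rewrite big_distrr /=; apply: eq_bigr => b _; by rewrite mulrA.
exact: (sum_evl (fun a => \sum_b A a b * u b)).
Qed.

Lemma psd_kerP A u : psd A -> (qf A u = 0 <-> app A u = (fun _ => 0)).
Proof.
move=> hA; split.
  move=> h; apply: funext1 => x; rewrite -sq_evl; exact: (psd_ker hA h).1.
move=> h; rewrite qf_dot h /dot; apply: big1 => a _; exact: mulr0.
Qed.

End Ops.

Arguments ev {R X} c _.
Arguments op0 {R X} _ _.

Section Sub.
Variable R : realType.
Local Notation C := R[i].
Variable X : {fset nat}.
Local Notation B := (basis X).
Local Notation OP := (op R X).
Local Notation mul := (@Defs.mul R X).
Local Notation tr := (@Defs.tr R X).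
Local Notation app := (@Defs.app R X).
Implicit Types (A G M P Q : OP) (u v w : B -> C).

Lemma app_lin A k u w : app A (fun a => k * u a + w a) = (fun a => k * app A u a + app A w a).
Proof.
apply: funext1 => a; rewrite /app big_distrr -big_split /=; apply: eq_bigr => b _; ring.
Qed.

Lemma app_sub A u w : app A (fun a => u a - w a) = (fun a => app A u a - app A w a).
Proof.
have -> : (fun a => u a - w a) = (fun a => (-1) * w a + u a) by apply: funext1 => a; ring.
rewrite app_lin; apply: funext1 => a; ring.
Qed.

Lemma real_le1 (x : C) : 0 <= x -> x * x <= x -> x <= 1.
Proof.
move=> x0 xx; move: (x0); rewrite le_eqVlt => /orP[/eqP <-|xpos]; first by rewrite ler01.
have : 0 <= x * (1 - x) by rewrite mulrBr mulr1 subr_ge0.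
by rewrite pmulr_rge0 // subr_ge0.
Qed.

Lemma proj_diag_le1 P a : projector P -> 0 <= P a a /\ P a a <= 1.
Proof.
case=> hP PP.
have E : P a a = \sum_c P a c * (P a c)^*.
  by rewrite -PP /mul; apply: eq_bigr => c _; rewrite (hP c a).
have x0 : 0 <= P a a by rewrite E; apply: sumr_ge0 => c _; exact: mul_conjC_ge0.
split => //; apply: real_le1 => //.
rewrite {3}E (bigD1 a) //= (conj_Creal (ger0_real x0)) lerDl.
by apply: sumr_ge0 => c _; exact: mul_conjC_ge0.
Qed.

Lemma tr_proj_le P : projector P -> tr P <= #|B|%:R.
Proof.
move=> hP; rewrite /tr -sumr_const; apply: ler_sum => a _.
exact: (proj_diag_le1 a hP).2.
Qed.

Lemma projector0 : projector (@op0 R X).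
Proof.
split => a b; first by rewrite /op0 conjC0.
by rewrite /mul /op0 big1 // => c _; rewrite mul0r.
Qed.

Lemma app0 w : app (@op0 R X) w = (fun _ => 0).
Proof. by apply: funext1 => a; rewrite /app big1 // => b _; rewrite /op0 mul0r. Qed.

Section SubSpace.
Variable S : (B -> C) -> Prop.
Hypothesis S0 : S (fun _ => 0).
Hypothesis Slin : forall k u w, S u -> S w -> S (fun a => k * u a + w a).

Lemma S_add u w : S u -> S w -> S (fun a => u a + w a).
Proof.
move=> hu hw; have := Slin 1 hu hw.
by have -> : (fun a => 1 * u a + w a) = (fun a => u a + w a) by apply: funext1 => a; rewrite mul1r.
Qed.

Lemma S_scale k u : S u -> S (fun a => k * u a).
Proof.
move=> hu; have := Slin k hu S0.
by have -> : (fun a => k * u a + 0) = (fun a => k * u a) by apply: funext1 => a; rewrite addr0.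
Qed.

Lemma proj_step n :
  (exists P, projector P /\ (forall w, S (app P w)) /\ (forall v, S v -> app P v = v)) \/
  (exists P, projector P /\ (forall w, S (app P w)) /\ tr P = n%:R).
Proof.
elim: n => [|n [IH|[P [hP [hS htr]]]]].
- right; exists (@op0 R X); split; first exact: projector0.
  split; first by move=> w; rewrite app0.
  by rewrite /tr big1.
- by left.
case: (classic (forall v, S v -> app P v = v)) => [H|H].
  by left; exists P.
right.
have [v [Sv hv]] : exists v, S v /\ app P v <> v.
  apply: NNPP => H'; apply: H => v Sv; apply: NNPP => hv; apply: H'; by exists v.
have PP := projPP hP.
set u := fun a => v a - app P v a.
have Su : S u.
  have := Slin (-1) (hS v) Sv.
  by have -> : (fun a => -1 * app P v a + v a) = u by apply: funext1 => a; rewrite /u; ring.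
have Pu : app P u = (fun _ => 0).
  rewrite /u app_sub -app_mul PP; apply: funext1 => a; exact: subrr.
set d := dot u u.
have d0 : 0 <= d := dot_ge0 u.
have dn0 : d != 0.
  apply/eqP => /dot_eq0 h; apply: hv; apply: funext1 => a.
  by have := congr1 (fun f => f a) h; rewrite /u /= => /eqP; rewrite subr_eq0 => /eqP.
have dR : d^* = d := conj_Creal (ger0_real d0).
set k := d^-1.
have kR : k^* = k.
  by rewrite /k fmorphV /= dR.
have hP' := hP; case: hP' => hPh hPP.
have Puc : forall b, \sum_c (u c)^* * P c b = 0.
  move=> b; transitivity ((app P u b)^*); last by rewrite Pu conjC0.
  rewrite /app rmorph_sum; apply: eq_bigr => c _.
  by rewrite rmorphM /= -hPh mulrC.
have Pu' : forall a, \sum_c P a c * u c = 0.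
  by move=> a; have := congr1 (fun f => f a) Pu.
exists (fun a b => P a b + k * outer u u a b); split; last split.
- split.
    move=> a b; rewrite rmorphD rmorphM /= kR -hPh /outer rmorphM /= conjCK.
    by congr (_ + _); ring.
  move=> a b; rewrite /mul.
  have E : forall c, (P a c + k * outer u u a c) * (P c b + k * outer u u c b) =
     P a c * P c b + (k * (u b)^*) * (P a c * u c) + (k * u a) * ((u c)^* * P c b)
     + (k * k * (u a * (u b)^*)) * ((u c)^* * u c).
    by move=> c; rewrite /outer; ring.
  under eq_bigr => c _ do rewrite E.
  rewrite !big_split /= -!big_distrr /= Pu' Puc -/(dot u u) -/d.
  have -> : \sum_c P a c * P c b = P a b by exact: hPP.
  rewrite /outer /k; field; exact: dn0.
- move=> w.
  have -> : app (fun a b => P a b + k * outer u u a b) w =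
            (fun a => (k * dot u w) * u a + app P w a).
    apply: funext1 => a; rewrite /app /dot.
    transitivity (\sum_b ((k * ((u b)^* * w b)) * u a + P a b * w b)).
      apply: eq_bigr => b _; rewrite /outer; ring.
    by rewrite big_split /= -big_distrl -big_distrr /=.
  exact: Slin.
- rewrite /tr big_split /= -big_distrr /= -/(tr P) htr.
  have -> : \sum_a outer u u a a = d.
    by rewrite /d /dot; apply: eq_bigr => a _; rewrite /outer mulrC.
  rewrite /k mulVf // -natr1 //.
Qed.

Lemma subspace_projector :
  exists P, projector P /\ (forall v, app P v = v <-> S v).
Proof.
case: (proj_step #|B|.+1) => [[P [hP [hS hv]]]|[P [hP [_ htr]]]].
  exists P; split => // v; split; last exact: hv.
  by move=> <-.
have := tr_proj_le hP; rewrite htr ler_nat ltnn //.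
Qed.

End SubSpace.

End Sub.

Section AbsD.
Variable R : realType.
Local Notation C := R[i].
Variable X : {fset nat}.
Local Notation B := (basis X).
Local Notation OP := (op R X).
Local Notation mul := (@Defs.mul R X).
Local Notation tr := (@Defs.tr R X).
Local Notation app := (@Defs.app R X).
Implicit Types (A G M P Q : OP) (u v w : B -> C).

Definition linD (D : OP -> C) :=
  forall k A A', D (fun a b => k * A a b + A' a b) = k * D A + D A'.

Lemma linD0 D : linD D -> D (@op0 R X) = 0.
Proof.
move=> hD; have := hD 1 (@op0 R X) (@op0 R X).
have -> : (fun a b => 1 * @op0 R X a b + @op0 R X a b) = @op0 R X.
  by apply: funext2 => a b; rewrite /op0 mulr0 addr0.
rewrite mul1r => /(congr1 (fun y => y - D (@op0 R X))).
by rewrite subrr addrK.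
Qed.

Lemma linD_seq D (I : Type) (r : seq I) (k : I -> C) (F : I -> OP) : linD D ->
  D (fun a b => \sum_(i <- r) k i * F i a b) = \sum_(i <- r) k i * D (F i).
Proof.
move=> hD; elim: r => [|i r IH].
  have -> : (fun a b => \sum_(j <- [::]) k j * F j a b) = @op0 R X.
    by apply: funext2 => a b; rewrite big_nil.
  by rewrite linD0 // big_nil.
have -> : (fun a b => \sum_(j <- i :: r) k j * F j a b) =
  (fun a b => k i * F i a b + (fun a b => \sum_(j <- r) k j * F j a b) a b).
  by apply: funext2 => a b; rewrite big_cons.
by rewrite hD IH big_cons.
Qed.

Lemma sum_delta (F : B -> C) x : \sum_i F i * (x == i)%:R = F x.
Proof.
rewrite (bigD1 x) //= eqxx mulr1 big1 ?addr0 //.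
by move=> i /negbTE; rewrite eq_sym => ->; rewrite mulr0.
Qed.

Definition repG (D : OP -> C) : OP := fun x y => D (outer (ev y) (ev x)).

Lemma D_rep D : linD D -> forall M, D M = tr (mul M (repG D)).
Proof.
move=> hD M.
have EM : M = (fun a b => \sum_(p : B * B)
                   M p.1 p.2 * outer (ev p.1) (ev p.2) a b).
  apply: funext2 => a b.
  rewrite -(pair_big xpredT xpredT (fun i j => M i j * outer (ev i) (ev j) a b)) /=.
  rewrite /outer /ev.
  under eq_bigr => i _ do under eq_bigr => j _ do rewrite conjC_nat mulrA.
  under eq_bigr => i _ do rewrite sum_delta.
  by rewrite sum_delta.
rewrite {1}EM linD_seq //.
rewrite -(pair_big xpredT xpredT (fun i j => M i j * D (outer (ev i) (ev j)))) /=.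
by [].
Qed.

Lemma tr_outer_mul G v : tr (mul (outer v v) G) = qf G v.
Proof.
rewrite /tr /mul /outer /qf exchange_big /=; apply: eq_bigr => a _.
apply: eq_bigr => b _; ring.
Qed.

Lemma repG_psd D : linD D -> (forall s, psd s -> 0 <= D s) -> psd (repG D).
Proof.
move=> hD hpos v; rewrite -/(qf _ _) -tr_outer_mul -D_rep //; exact: hpos (psd_outer v).
Qed.

Lemma absD_fwd P G : projector P -> psd G ->
  (forall s, psd s -> tr (mul s G) <= tr s - tr (mul P s)) ->
  forall psi, app P psi = psi -> qf G psi = 0.
Proof.
move=> hP hG H psi hpsi.
have := H _ (psd_outer psi).
rewrite tr_outer_mul tr_outer tr_mul_outer hpsi subrr => hle.
by apply: le_anti; rewrite hle; apply: hG.
Qed.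

Lemma absD_bwd P G : projector P -> psd G ->
  (forall s, psd s -> tr (mul s G) <= tr s) ->
  (forall psi, app P psi = psi -> qf G psi = 0) ->
  forall s, psd s -> tr (mul s G) <= tr s - tr (mul P s).
Proof.
move=> hP hG hGle H.
have PP := projPP hP; have hPh : herm P by case: hP.
have colP : forall c, app P (pcol P c) = pcol P c.
  move=> c; apply: funext1 => a.
  by have := congr1 (fun f => f a c) PP.
have GP : mul G P = op0.
  apply: funext2 => x c.
  have := congr1 (fun f => f x) ((psd_kerP _ hG).1 (H _ (colP c))).
  by [].
have PG : mul P G = op0.
  apply: funext2 => c x.
  have h := (psd_ker hG (H _ (colP c))).2 (ev x).
  rewrite /op0 -h /sq /mul; apply: eq_bigr => a _.
  rewrite /pcol (hPh c a).
  by rewrite (sum_evr (fun b => (P a c)^* * G a b)).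
set Pp := compl P.
have GPp : mul G Pp = G.
  by rewrite /Pp /compl mulBr mul_idr GP; apply: funext2 => a b; rewrite /opB /op0 subr0.
have PpG : mul Pp G = G.
  by rewrite /Pp /compl mulBl mul_idl PG; apply: funext2 => a b; rewrite /opB /op0 subr0.
move=> s hs.
set t := mul Pp (mul s Pp).
have ht : psd t := psd_conj (herm_compl hPh) hs.
have E1 : tr (mul t G) = tr (mul s G).
  by rewrite /t -mulA trC -mulA GPp -mulA PpG.
have E2 : tr t = tr s - tr (mul P s).
  rewrite /t trC -mulA (projPP (compl_proj hP)) trC /Pp /compl mulBl trB mul_idl //.
rewrite -E1 -E2; exact: hGle.
Qed.

Lemma ker_projector G : psd G ->
  exists P0, projector P0 /\ (forall psi, app P0 psi = psi <-> qf G psi = 0).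
Proof.
move=> hG.
have S0 : app G (fun _ => 0) = (fun _ => 0).
  by apply: funext1 => a; rewrite /app big1 // => b _; rewrite mulr0.
have Slin : forall k u w, app G u = (fun _ => 0) -> app G w = (fun _ => 0) ->
    app G (fun a => k * u a + w a) = (fun _ => 0).
  move=> k u w hu hw; rewrite app_lin hu hw; apply: funext1 => a; ring.
have [P0 [hP0 H]] := @subspace_projector R X (fun psi => app G psi = (fun _ => 0)) S0 Slin.
exists P0; split => // psi; rewrite H; split; by move/(psd_kerP _ hG).
Qed.

Section CharD.
Variable D : OP -> C.
Hypothesis hD : linD D.
Hypothesis Dpos : forall s, psd s -> 0 <= D s.
Hypothesis Dle : forall s, psd s -> D s <= tr s.

Lemma charD P : projector P ->
  (forall s, psd s -> D s <= tr s - tr (mul P s)) <->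
  (forall psi, app P psi = psi -> D (outer psi psi) = 0).
Proof.
move=> hP; have hG := repG_psd hD Dpos.
have Hle : forall s, psd s -> tr (mul s (repG D)) <= tr s by move=> s hs; rewrite -D_rep //; exact: Dle.
split.
  move=> H psi hpsi; rewrite D_rep // tr_outer_mul; apply: (absD_fwd hP hG) => // s hs.
  by rewrite -D_rep //; apply: H.
move=> H s hs; rewrite D_rep //; apply: (absD_bwd hP hG Hle) => // psi hpsi.
by rewrite -tr_outer_mul -D_rep //; apply: H.
Qed.

Lemma existsD : exists P0, projector P0 /\
  (forall psi, app P0 psi = psi <-> D (outer psi psi) = 0).
Proof.
have hG := repG_psd hD Dpos.
have [P0 [hP0 H]] := ker_projector hG.
exists P0; split => // psi; rewrite H D_rep // tr_outer_mul //.
Qed.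

End CharD.

End AbsD.

Local Notation mul := Defs.mul.
Local Notation tr := Defs.tr.
Local Notation app := Defs.app.

Section ExtO.
Variable R : realType.
Local Notation C := R[i].

Lemma decomp (S X : {fset nat}) (a : basis X) :
  a = glue (restr S a) (canon S a) /\ canon S (canon S a) = canon S a.
Proof. split; [by rewrite /canon glue_glue glue_restr | exact: canon_idem]. Qed.

Lemma extO_id (S : {fset nat}) (A : op R S) : EO S A = A.
Proof.
apply: funext2 => a b; rewrite /extO !restr_same.
have -> : agree_out S a b = true.
  by apply/forallP => t; rewrite fsvalP.
by [].
Qed.

Lemma extO_comp (S S' Z : {fset nat}) (A : op R S) :
  (S `<=` S') -> (S' `<=` Z) -> EO Z (EO S' A) = EO Z A.
Proof.
move=> SS' S'Z; apply: funext2 => a b; rewrite /extO !(restr_restr _ SS' S'Z).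
have -> : agree_out S a b = agree_out S' a b && agree_out S (restr S' a) (restr S' b).
  apply/idP/idP.
    move=> /forallP H; apply/andP; split; apply/forallP => t; apply/implyP => ht.
      apply: (implyP (H t)); apply: contra ht; exact: (fsubsetP SS').
    have tZ : fsval t \in Z := fsubsetP S'Z _ (fsvalP t).
    rewrite !ffunE (insub_in tZ); exact: (implyP (H [` tZ])).
  case/andP => /forallP H1 /forallP H2; apply/forallP => t; apply/implyP => ht.
  case: (boolP (fsval t \in S')) => h.
    have := implyP (H2 [` h]) ht; rewrite !ffunE (insub_in (fsvalP t)) /=.
    by have -> : [` fsvalP t] = t by apply: val_inj.
  exact: (implyP (H1 t)).
by case: (agree_out S' a b); case: (agree_out S _ _).
Qed.

Lemma canon_sum (M : nmodType) (Z X : {fset nat}) (c : basis X) (F : basis X -> M) :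
  canon Z c = c ->
  \sum_(k : basis X | canon Z k == k) (if c == k then F k else 0) = F c.
Proof.
move=> hc; rewrite (bigD1 c) /= ?hc ?eqxx // big1 ?addr0 //.
by move=> k /andP[_ /negbTE]; rewrite eq_sym => ->.
Qed.

Lemma mul_extO (S X : {fset nat}) (A A' : op R S) : (S `<=` X) ->
  mul (EO X A) (EO X A') = EO X (mul A A').
Proof.
move=> SX; apply: funext2 => a b.
have [ea ha] := decomp S a; have [eb hb] := decomp S b.
rewrite /mul (sum_split _ SX).
rewrite ea eb (extO_glue _ _ _ (fsubset_refl S) SX ha hb) !extO_id.
under eq_bigr => k hk.
  under eq_bigr => c' _ do rewrite (extO_glue _ _ _ (fsubset_refl S) SX ha (eqP hk))
       (extO_glue _ _ _ (fsubset_refl S) SX (eqP hk) hb) !extO_id.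
  over.
transitivity (\sum_(k : basis X | canon S k == k)
   (if canon S a == k then (if k == canon S b then mul A A' (restr S a) (restr S b) else 0) else 0)).
  apply: eq_bigr => k _.
  case: (canon S a == k); case: (k == canon S b); rewrite /mul //=;
    by apply: big1 => c _; rewrite ?mul0r ?mulr0.
rewrite (canon_sum (fun k => if k == canon S b then _ else 0) ha).
by case: (_ == _).
Qed.

Lemma agree_sym (S X : {fset nat}) (a b : basis X) : agree_out S a b = agree_out S b a.
Proof. by apply/idP/idP => /forallP H; apply/forallP => t; rewrite eq_sym; apply: H. Qed.

Lemma extO_herm (S X : {fset nat}) (A : op R S) : herm A -> herm (EO X A).
Proof.
move=> hA a b; rewrite /extO agree_sym.
by case: (agree_out S b a); rewrite ?conjC0 // -hA.
Qed.

Lemma extO_proj (S X : {fset nat}) (A : op R S) : (S `<=` X) -> projector A -> projector (EO X A).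
Proof.
move=> SX [hA AA]; split; first exact: extO_herm.
move=> a b; rewrite mul_extO //.
by have -> : mul A A = A by apply: funext2.
Qed.

Lemma glue_inj (S X : {fset nat}) (a b : basis S) (k k' : basis X) : (S `<=` X) ->
  canon S k = k -> canon S k' = k' ->
  (glue a k == glue b k') = (k == k') && (a == b).
Proof.
move=> SX hk hk'; apply/idP/idP.
  move/eqP => e; apply/andP; split; apply/eqP.
    by rewrite -hk -hk' -(canon_glue a) -(canon_glue b k') e.
  by rewrite -(restr_glue a k SX) -(restr_glue b k' SX) e.
by case/andP => /eqP -> /eqP ->.
Qed.

Lemma extO_idop (S X : {fset nat}) : (S `<=` X) -> EO X (@idop R S) = @idop R X.
Proof.
move=> SX; apply: funext2 => a b.
have [ea ha] := decomp S a; have [eb hb] := decomp S b.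
rewrite ea eb (extO_glue _ _ _ (fsubset_refl S) SX ha hb) extO_id /idop (glue_inj _ _ SX ha hb).
by case: (_ == _).
Qed.

End ExtO.

Definition blk (R : realType) (Z X : {fset nat}) (c : basis X) (rho : op R X) : op R Z :=
  fun a b => rho (glue a c) (glue b c).
Arguments blk {R} Z {X} c rho _ _.

Section Blocks.
Variable R : realType.
Local Notation C := R[i].

Lemma tr_split (Z X : {fset nat}) (rho : op R X) : (Z `<=` X) ->
  tr rho = \sum_(c : basis X | canon Z c == c) tr (blk Z c rho).
Proof. by move=> ZX; rewrite /tr (sum_split _ ZX). Qed.

Lemma sum_on_block (M : nmodType) (Z X : {fset nat}) (c : basis X) (F : basis X -> M) :
  (Z `<=` X) -> canon Z c = c -> (forall a, canon Z a != c -> F a = 0) ->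
  \sum_a F a = \sum_(a' : basis Z) F (glue a' c).
Proof.
move=> ZX hc HF; rewrite (sum_split _ ZX) (bigD1 c) /=; last by rewrite hc.
rewrite [X in _ + X]big1 ?addr0 //.
move=> k /andP[/eqP hk hkc]; apply: big1 => a' _; apply: HF.
by rewrite canon_glue hk.
Qed.

Lemma trO_split (S Z X : {fset nat}) (A : op R S) (rho : op R X) :
  (S `<=` Z) -> (Z `<=` X) ->
  tr (mul (EO X A) rho) = \sum_(c : basis X | canon Z c == c) tr (mul (EO Z A) (blk Z c rho)).
Proof.
move=> SZ ZX; rewrite /tr (sum_split _ ZX); apply: eq_bigr => c /eqP hc.
apply: eq_bigr => a' _; rewrite /mul /blk.
rewrite (@sum_on_block _ Z X c) //.
  apply: eq_bigr => b' _; by rewrite (extO_glue _ _ _ SZ ZX hc hc) eqxx.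
move=> b hb.
have [eb hb'] := decomp Z b.
rewrite eb (extO_glue _ _ _ SZ ZX hc hb').
case: (boolP (c == canon Z b)) => h; last by rewrite mul0r.
by rewrite eq_sym h in hb.
Qed.

Lemma psd_blk (Z X : {fset nat}) (c : basis X) (rho : op R X) :
  (Z `<=` X) -> canon Z c = c -> psd rho -> psd (blk Z c rho).
Proof.
move=> ZX hc hr v.
set v' := fun a : basis X => if canon Z a == c then v (restr Z a) else 0.
have hv' : forall a, canon Z a != c -> v' a = 0 by move=> a /negbTE h; rewrite /v' h.
have ev' : forall a', v' (glue a' c) = v a'.
  by move=> a'; rewrite /v' canon_glue hc eqxx restr_glue.
have := hr v'.
rewrite (@sum_on_block _ Z X c) //; last first.
  by move=> a ha; rewrite hv' // conjC0; apply: big1 => b _; rewrite !mul0r.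
have E1 : forall a', \sum_b (v' (glue a' c))^* * rho (glue a' c) b * v' b =
    \sum_b' (v a')^* * blk Z c rho a' b' * v b'.
  move=> a'; rewrite (@sum_on_block _ Z X c _ ZX hc); last first.
    by move=> b hb; rewrite (hv' b hb) mulr0.
  by apply: eq_bigr => b' _; rewrite !ev'.
by under eq_bigr => a' _ do rewrite E1.
Qed.

End Blocks.

Section ES.
Variable R : realType.
Local Notation C := R[i].
Variable V : {fset nat}.
Variable E : superop R V.
Hypothesis HE : DProg E.

Lemma E_lin k (A A' : op R V) a b :
  E (fun i j => k * A i j + A' i j) a b = k * E A a b + E A' a b.
Proof. by case: HE => h _ _; apply: h. Qed.

Lemma E_0 a b : E op0 a b = 0.
Proof.
have := E_lin 1 op0 op0 a b.
have -> : (fun i j => 1 * @op0 R V i j + @op0 R V i j) = op0.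
  by apply: funext2 => i j; rewrite /op0 mulr0 addr0.
rewrite mul1r => /(congr1 (fun y => y - E op0 a b)).
by rewrite subrr addrK.
Qed.

Lemma extS_lin (Z : {fset nat}) k (A A' : op R Z) :
  extS E (fun a b => k * A a b + A' a b) = (fun a b => k * extS E A a b + extS E A' a b).
Proof. apply: funext2 => a b; rewrite /extS; exact: E_lin. Qed.

Lemma extS_scale (Z : {fset nat}) k (A : op R Z) :
  extS E (fun a b => k * A a b) = (fun a b => k * extS E A a b).
Proof.
apply: funext2 => a b; rewrite /extS.
have := E_lin k (fun u v => A (glue u a) (glue v b)) op0 (restr V a) (restr V b).
rewrite E_0 addr0 => <-; congr (E _ _ _); apply: funext2 => i j; by rewrite /op0 addr0.
Qed.

Lemma extS_same (tau : op R V) : extS E tau = E tau.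
Proof.
apply: funext2 => a b; rewrite /extS !restr_same; congr (E _ _ _).
by apply: funext2 => u v; rewrite !glue_same.
Qed.

Lemma extS_blk (Z X : {fset nat}) (c : basis X) (rho : op R X) :
  (V `<=` Z) -> (Z `<=` X) -> blk Z c (extS E rho) = extS E (blk Z c rho).
Proof.
move=> VZ ZX; apply: funext2 => a b; rewrite /blk /extS !(restr_glue2 _ _ VZ ZX).
congr (E _ _ _); apply: funext2 => u v; by rewrite !(glue_glue2 _ _ _ VZ).
Qed.

Lemma extS_psd (Z : {fset nat}) (s : op R Z) : (V `<=` Z) -> psd s -> psd (extS E s).
Proof. by move=> VZ hs; case: HE => _ h _; apply: h. Qed.

Lemma tr_extS_le (Z : {fset nat}) (s : op R Z) : (V `<=` Z) -> psd s -> tr (extS E s) <= tr s.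
Proof.
move=> VZ hs.
rewrite (tr_split _ VZ) [X in _ <= X](tr_split _ VZ).
apply: ler_sum => c /eqP hc.
rewrite extS_blk ?fsubset_refl // extS_same.
case: HE => _ _ h; apply: h; exact: psd_blk.
Qed.

End ES.


Section Scal.
Variable R : realType.
Variable Z : {fset nat}.

Lemma tr_scale k (s : op R Z) : tr (fun a b => k * s a b) = k * tr s.
Proof. by rewrite /tr big_distrr. Qed.

Lemma trmul_scale k (A s : op R Z) : tr (mul A (fun a b => k * s a b)) = k * tr (mul A s).
Proof.
rewrite /tr /mul big_distrr; apply: eq_bigr => a _; rewrite big_distrr.
by apply: eq_bigr => b _; rewrite mulrCA.
Qed.

Lemma psd_scale k (s : op R Z) : 0 <= k -> psd s -> psd (fun a b => k * s a b).
Proof.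
move=> k0 hs v.
have -> : \sum_a \sum_b (v a)^* * (k * s a b) * v b = k * qf s v.
  rewrite /qf big_distrr; apply: eq_bigr => a _; rewrite big_distrr /=.
  by apply: eq_bigr => b _; ring.
by apply: mulr_ge0 => //; apply: hs.
Qed.

Lemma normalize (s : op R Z) : psd s ->
  exists k : R[i], 0 < k /\ pdo (fun a b => k * s a b).
Proof.
move=> hs; have t0 := tr_psd_ge0 hs.
have h1 : 0 < 1 + tr s by apply: (lt_le_trans ltr01); rewrite lerDl.
exists (1 + tr s)^-1; split; first by rewrite invr_gt0.
split; first by apply: psd_scale => //; rewrite invr_ge0 ltW.
rewrite tr_scale mulrC ler_pdivrMr // mul1r.
by rewrite lerDr ler01.
Qed.

End Scal.

Section Sat.
Variable R : realType.
Variable V : {fset nat}.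
Variable E : superop R V.
Hypothesis HE : DProg E.

Definition satHt (Z S T : {fset nat}) (P : op R S) (Q : op R T) :=
  forall s : op R Z, psd s -> tr (mul (EO Z P) s) <= tr (mul (EO Z Q) (extS E s)).
Definition satHp (Z S T : {fset nat}) (P : op R S) (Q : op R T) :=
  forall s : op R Z, psd s ->
    tr (mul (EO Z P) s) <= tr (mul (EO Z Q) (extS E s)) + tr s - tr (extS E s).

Lemma sat_tot_H (S T : {fset nat}) (P : op R S) (Q : op R T) :
  sat_tot E P Q <-> satHt (V `|` S `|` T) P Q.
Proof.
set Y := V `|` S `|` T.
have VY : V `<=` Y by rewrite /Y; fsub.
have SY : S `<=` Y by rewrite /Y; fsub.
have TY : T `<=` Y by rewrite /Y; fsub.
split.
  move=> H s hs; have [k [k0 hk]] := normalize hs.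
  have := H Y (fsubset_refl _) _ hk.
  by rewrite trmul_scale extS_scale // trmul_scale ler_pM2l.
move=> H X YX rho [hr _].
rewrite (trO_split _ _ SY YX) (trO_split _ _ TY YX).
apply: ler_sum => c /eqP hc.
rewrite extS_blk //; apply: H; exact: psd_blk.
Qed.

Lemma sat_par_H (S T : {fset nat}) (P : op R S) (Q : op R T) :
  sat_par E P Q <-> satHp (V `|` S `|` T) P Q.
Proof.
set Y := V `|` S `|` T.
have VY : V `<=` Y by rewrite /Y; fsub.
have SY : S `<=` Y by rewrite /Y; fsub.
have TY : T `<=` Y by rewrite /Y; fsub.
split.
  move=> H s hs; have [k [k0 hk]] := normalize hs.
  have := H Y (fsubset_refl _) _ hk.
  rewrite trmul_scale extS_scale // trmul_scale !tr_scale -mulrDr -mulrBr.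
  by rewrite ler_pM2l.
move=> H X YX rho [hr _].
rewrite (trO_split _ _ SY YX) (trO_split _ _ TY YX) (tr_split _ YX) (tr_split (extS E rho) YX).
rewrite -big_split -sumrB /=.
apply: ler_sum => c /eqP hc.
rewrite extS_blk //; apply: H; exact: psd_blk.
Qed.

End Sat.


Section K.
Variable R : realType.
Local Notation C := R[i].
Variable V : {fset nat}.
Variable E : superop R V.
Hypothesis HE : DProg E.

Section AtZ.
Variable Z : {fset nat}.
Hypothesis VZ : V `<=` Z.

Definition Dt (Qz : op R Z) (s : op R Z) := tr s - tr (mul Qz (extS E s)).
Definition Dp (Qz : op R Z) (s : op R Z) := tr (extS E s) - tr (mul Qz (extS E s)).

Lemma tr_lin k (A A' : op R Z) : tr (fun a b => k * A a b + A' a b) = k * tr A + tr A'.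
Proof. by rewrite /tr big_split /= big_distrr. Qed.

Lemma trmul_lin (Qz : op R Z) k (A A' : op R Z) :
  tr (mul Qz (fun a b => k * A a b + A' a b)) = k * tr (mul Qz A) + tr (mul Qz A').
Proof.
rewrite /tr big_distrr -big_split /=; apply: eq_bigr => a _.
rewrite /mul big_distrr -big_split /=; apply: eq_bigr => b _; ring.
Qed.

Lemma linD_Dt Qz : linD (Dt Qz).
Proof. move=> k A A'; rewrite /Dt extS_lin // tr_lin trmul_lin; ring. Qed.

Lemma linD_Dp Qz : linD (Dp Qz).
Proof. move=> k A A'; rewrite /Dp extS_lin // tr_lin trmul_lin; ring. Qed.

Lemma Dt_pos Qz : projector Qz -> forall s, psd s -> 0 <= Dt Qz s.
Proof.
move=> hQ s hs; rewrite /Dt subr_ge0.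
apply: le_trans (trP_le hQ (extS_psd HE VZ hs)) (tr_extS_le HE VZ hs).
Qed.

Lemma Dt_le Qz : projector Qz -> forall s, psd s -> Dt Qz s <= tr s.
Proof.
move=> hQ s hs; rewrite /Dt lerBlDr lerDl; exact: trP_ge0 hQ (extS_psd HE VZ hs).
Qed.

Lemma Dp_pos Qz : projector Qz -> forall s, psd s -> 0 <= Dp Qz s.
Proof. move=> hQ s hs; rewrite /Dp subr_ge0; exact: trP_le hQ (extS_psd HE VZ hs). Qed.

Lemma Dp_le Qz : projector Qz -> forall s, psd s -> Dp Qz s <= tr s.
Proof.
move=> hQ s hs; rewrite /Dp.
apply: le_trans (tr_extS_le HE VZ hs); rewrite lerBlDr lerDl.
exact: trP_ge0 hQ (extS_psd HE VZ hs).
Qed.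

Lemma le_iff_sub (x y x' y' : C) : y - x = y' - x' -> (x <= y <-> x' <= y').
Proof. by move=> e; rewrite -subr_ge0 e subr_ge0. Qed.

Lemma satHt_iff (S T : {fset nat}) (P : op R S) (Q : op R T) :
  (S `<=` Z) -> (T `<=` Z) -> projector P -> projector Q ->
  satHt E Z P Q <-> (forall psi, app (EO Z P) psi = psi -> Dt (EO Z Q) (outer psi psi) = 0).
Proof.
move=> SZ TZ hP hQ.
have hQz := extO_proj TZ hQ; have hPz := extO_proj SZ hP.
rewrite -(charD (linD_Dt _) (Dt_pos hQz) (Dt_le hQz) hPz).
split => H s hs; have := H s hs; apply: (proj1 (le_iff_sub _)); rewrite /Dt; ring.
Qed.

Lemma satHp_iff (S T : {fset nat}) (P : op R S) (Q : op R T) :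
  (S `<=` Z) -> (T `<=` Z) -> projector P -> projector Q ->
  satHp E Z P Q <-> (forall psi, app (EO Z P) psi = psi -> Dp (EO Z Q) (outer psi psi) = 0).
Proof.
move=> SZ TZ hP hQ.
have hQz := extO_proj TZ hQ; have hPz := extO_proj SZ hP.
rewrite -(charD (linD_Dp _) (Dp_pos hQz) (Dp_le hQz) hPz).
split => H s hs; have := H s hs; apply: (proj1 (le_iff_sub _)); rewrite /Dp; ring.
Qed.

End AtZ.

Lemma sat_tot_iff (S T Z : {fset nat}) (P : op R S) (Q : op R T) :
  V `|` S `|` T = Z -> projector P -> projector Q ->
  sat_tot E P Q <-> (forall psi, app (EO Z P) psi = psi -> Dt (EO Z Q) (outer psi psi) = 0).
Proof.
move=> eZ hP hQ; rewrite (sat_tot_H HE) eZ.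
apply: satHt_iff => //; rewrite -eZ; fsub.
Qed.

Lemma sat_par_iff (S T Z : {fset nat}) (P : op R S) (Q : op R T) :
  V `|` S `|` T = Z -> projector P -> projector Q ->
  sat_par E P Q <-> (forall psi, app (EO Z P) psi = psi -> Dp (EO Z Q) (outer psi psi) = 0).
Proof.
move=> eZ hP hQ; rewrite (sat_par_H HE) eZ.
apply: satHp_iff => //; rewrite -eZ; fsub.
Qed.

Lemma sqle_at (S T U : {fset nat}) (A : op R S) (B : op R T) :
  S `|` T = U ->
  sqle A B <-> (forall v : basis U -> C, inrange (EO U A) v -> inrange (EO U B) v).
Proof. by move=> <-. Qed.

Lemma app_ev (Z : {fset nat}) (A : op R Z) c : app A (ev c) = pcol A c.
Proof. apply: funext1 => a; exact: sum_evr. Qed.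

Lemma app_id (Z : {fset nat}) v : app (@idop R Z) v = v.
Proof.
apply: funext1 => a; rewrite /app /idop (bigD1 a) //= eqxx mul1r big1 ?addr0 //.
by move=> b /negbTE; rewrite eq_sym => ->; rewrite mul0r.
Qed.

Lemma app_compl (Z : {fset nat}) (P : op R Z) v : app (compl P) v = (fun a => v a - app P v a).
Proof.
apply: funext1 => a; rewrite /app /compl /opB.
under eq_bigr => b _ do rewrite mulrBl.
rewrite sumrB; congr (_ - _).
rewrite (bigD1 a) //= /idop eqxx mul1r big1 ?addr0 // => b /negbTE.
by rewrite eq_sym => ->; rewrite mul0r.
Qed.

Lemma inrange_proj (Z : {fset nat}) (P : op R Z) v :
  projector P -> (inrange P v <-> app P v = v).
Proof. by move=> hP; apply: inrangeP; apply: projPP. Qed.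

Lemma wp_spec (W : {fset nat}) (Q : op R W) : projector Q ->
  projector (wp E Q) /\ sat_tot E (wp E Q) Q /\
  (forall P' : op R (V `|` W), projector P' -> sat_tot E P' Q -> sqle P' (wp E Q)).
Proof.
move=> hQ; set Z := V `|` W.
have VZ : V `<=` Z by rewrite /Z; fsub.
have WZ : W `<=` Z by rewrite /Z; fsub.
have eZ : V `|` Z `|` W = Z by rewrite /Z; fseq.
have hQz := extO_proj WZ hQ.
have [P0 [hP0 H0]] := existsD (linD_Dt (EO Z Q)) (Dt_pos VZ hQz).
rewrite /wp; match goal with |- context [epsilon ?i ?p] => apply: (@epsilon_spec _ i p) end; exists P0; split => //; split.
  apply/(sat_tot_iff eZ hP0 hQ) => psi; rewrite extO_id; exact: (H0 psi).1.
move=> P' hP' /(sat_tot_iff eZ hP' hQ) H'.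
apply/(sqle_at _ _ (fsetUid Z)) => v; rewrite !extO_id !inrange_proj //.
move=> hv; apply/H0; apply: H'; by rewrite extO_id.
Qed.

Lemma wlp_spec (W : {fset nat}) (Q : op R W) : projector Q ->
  projector (wlp E Q) /\ sat_par E (wlp E Q) Q /\
  (forall P' : op R (V `|` W), projector P' -> sat_par E P' Q -> sqle P' (wlp E Q)).
Proof.
move=> hQ; set Z := V `|` W.
have VZ : V `<=` Z by rewrite /Z; fsub.
have WZ : W `<=` Z by rewrite /Z; fsub.
have eZ : V `|` Z `|` W = Z by rewrite /Z; fseq.
have hQz := extO_proj WZ hQ.
have [P0 [hP0 H0]] := existsD (linD_Dp (EO Z Q)) (Dp_pos VZ hQz).
rewrite /wlp; match goal with |- context [epsilon ?i ?p] => apply: (@epsilon_spec _ i p) end; exists P0; split => //; split.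
  apply/(sat_par_iff eZ hP0 hQ) => psi; rewrite extO_id; exact: (H0 psi).1.
move=> P' hP' /(sat_par_iff eZ hP' hQ) H'.
apply/(sqle_at _ _ (fsetUid Z)) => v; rewrite !extO_id !inrange_proj //.
move=> hv; apply/H0; apply: H'; by rewrite extO_id.
Qed.

Lemma sp_spec (W : {fset nat}) (P : op R W) : projector P ->
  projector (sp E P) /\ sat_par E P (sp E P) /\
  (forall R'' : op R (V `|` W), projector R'' -> sat_par E P R'' -> sqle (sp E P) R'').
Proof.
move=> hP; set Z := V `|` W.
have VZ : V `<=` Z by rewrite /Z; fsub.
have WZ : W `<=` Z by rewrite /Z; fsub.
have eZ : V `|` W `|` Z = Z by rewrite /Z; fseq.
have hPz := extO_proj WZ hP.
set S := fun chi : basis Z -> C => forall psi, app (EO Z P) psi = psi ->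
   app (extS E (outer psi psi)) chi = (fun _ => 0).
have S0 : S (fun _ => 0).
  by move=> psi _; apply: funext1 => a; rewrite /app big1 // => b _; rewrite mulr0.
have Slin : forall k u w, S u -> S w -> S (fun a => k * u a + w a).
  move=> k u w hu hw psi hpsi; rewrite app_lin (hu _ hpsi) (hw _ hpsi).
  by apply: funext1 => a; ring.
have [K0 [hK0 HK]] := subspace_projector S0 Slin.
have hR0 := compl_proj hK0.
rewrite /sp; match goal with |- context [epsilon ?i ?p] => apply: (@epsilon_spec _ i p) end.
exists (compl K0); split => //; split.
  apply/(sat_par_iff eZ hP hR0) => psi hpsi; rewrite extO_id /Dp.
  set s := extS E (outer psi psi).
  have hs : psd s := extS_psd HE VZ (psd_outer psi).
  have -> : tr s - tr (mul (compl K0) s) = tr (mul K0 s).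
    by rewrite /compl mulBl trB mul_idl; ring.
  rewrite (trP_qf _ hK0); apply: big1 => c _.
  apply/(psd_kerP _ hs); apply: (HK _).1 => //.
  by rewrite -app_mul (projPP hK0).
move=> R'' hR'' /(sat_par_iff eZ hP hR'') H''.
apply/(sqle_at _ _ (fsetUid Z)) => v; rewrite !extO_id !inrange_proj //.
move=> hv.
set Rc := compl R''.
have hRc : projector Rc := compl_proj hR''.
set chi := app Rc v.
have Schi : S chi.
  move=> psi hpsi; have := H'' psi; rewrite extO_id => /(_ hpsi) h.
  set s := extS E (outer psi psi) in h *.
  have hs : psd s := extS_psd HE VZ (psd_outer psi).
  have tr0 : tr (mul Rc s) = 0.
    by rewrite /Rc /compl mulBl trB mul_idl; rewrite /Dp in h.
  rewrite (trP_qf _ hRc) in tr0.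
  have hq : forall c, qf s (app Rc (ev c)) = 0.
    by move=> c; apply: (psumr_eq0P (fun c _ => hs _) tr0).
  have hm : mul s Rc = op0.
    apply: funext2 => x c.
    have := congr1 (fun f => f x) ((psd_kerP _ hs).1 (hq c)).
    by rewrite app_ev.
  by rewrite /chi -app_mul hm app0.
have Kchi : app K0 chi = chi by apply/HK.
have Kv : app K0 v = (fun _ => 0).
  move: hv; rewrite app_compl => hv; apply: funext1 => a.
  have := congr1 (fun f => f a) hv => /= /eqP.
  by rewrite subr_eq addrC -subr_eq subrr => /eqP <-.
have hRch : herm Rc by case: hRc.
have hK0h : herm K0 by case: hK0.
have d0 : dot chi chi = 0.
  rewrite {1}/chi -dot_herm // -app_mul (projPP hRc) -/chi -Kchi dot_herm // Kv.
  by rewrite /dot big1 // => a _; rewrite conjC0 mul0r.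
have := dot_eq0 d0; rewrite /chi app_compl => h.
apply: funext1 => a; have := congr1 (fun f => f a) h => /= /eqP.
by rewrite subr_eq0 => /eqP <-.
Qed.

End K.


Section F.
Variable R : realType.
Local Notation C := R[i].
Variable V : {fset nat}.
Variable E : superop R V.
Hypothesis HE : DProg E.

Lemma idop_proj (X : {fset nat}) : projector (@idop R X).
Proof.
split.
  move=> a b; rewrite /idop eq_sym; by case: (b == a); rewrite ?conjC1 ?conjC0.
by move=> a b; rewrite mul_idl.
Qed.

Lemma tot_par (S T : {fset nat}) (P : op R S) (Q : op R T) : sat_tot E P Q -> sat_par E P Q.
Proof.
move=> H X hX rho hr; have h := H X hX rho hr.
have VX : V `<=` X by apply: fsubset_trans hX; fsub.
have := tr_extS_le HE VX hr.1 => hle.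
rewrite -addrA; apply: (le_trans h); rewrite lerDl subr_ge0 //.
Qed.

Lemma tot_id (W S : {fset nat}) (P : op R S) (Q : op R W) :
  projector Q -> sat_tot E P Q -> sat_tot E P (@idop R W).
Proof.
move=> hQ H X hX rho hr; have h := H X hX rho hr.
have VX : V `<=` X by apply: fsubset_trans hX; fsub.
have WX : W `<=` X by apply: fsubset_trans hX; fsub.
rewrite extO_idop // mul_idl; apply: (le_trans h).
exact: trP_le (extO_proj WX hQ) (extS_psd HE VX hr.1).
Qed.

Lemma par_post_ext (S T T' : {fset nat}) (P : op R S) (Q : op R T) :
  (T `<=` T') -> sat_par E P Q -> sat_par E P (EO T' Q).
Proof.
move=> TT' H X hX; rewrite (extO_comp _ TT'); last by apply: fsubset_trans hX; fsub.
apply: H; apply: fsubset_trans hX.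
apply/fsubsetP => x; rewrite !in_fsetU => /orP[/orP[->|->]|h]; rewrite ?orbT //.
by rewrite (fsubsetP TT' _ h) orbT.
Qed.

Lemma par_pre_ext (S S' T : {fset nat}) (P : op R S) (Q : op R T) :
  (S `<=` S') -> sat_par E P Q -> sat_par E (EO S' P) Q.
Proof.
move=> SS' H X hX; rewrite (extO_comp _ SS'); last by apply: fsubset_trans hX; fsub.
apply: H; apply: fsubset_trans hX.
apply/fsubsetP => x; rewrite !in_fsetU => /orP[/orP[->|h]|->]; rewrite ?orbT //.
by rewrite (fsubsetP SS' _ h) orbT.
Qed.

Lemma Dcomb (Z : {fset nat}) (Qz : op R Z) (s : op R Z) :
  Dp E Qz s = 0 -> Dt E (@idop R Z) s = 0 -> Dt E Qz s = 0.
Proof.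
rewrite /Dt /Dp mul_idl => h1 h2.
have -> : tr s - tr (mul Qz (extS E s)) =
   (tr s - tr (extS E s)) + (tr (extS E s) - tr (mul Qz (extS E s))) by ring.
by rewrite h1 h2 addr0.
Qed.

End F.

Theorem theorem4p9 (R : realType) (V W : {fset nat}) (E : superop R V)
  (HE : DProg E) (P Q : op R W) (HP : projector P) (HQ : projector Q) :
  (* (1) *)
  (sqle (sp E (wlp E Q)) Q /\ sqle P (wlp E (sp E P))) /\
  (* (2): wp.E.Q = wlp.E.Q /\ wp.E.I_W, as subspaces of H_{V u W} *)
  (forall v : basis (V `|` W)%fset -> R[i],
     inrange (wp E Q) v <-> (inrange (wlp E Q) v /\ inrange (wp E (@idop R W)) v)) /\
  (* (3) *)
  (sqle (sp E (wp E Q)) Q /\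
   (sqle P (wp E (@idop R W)) -> sqle P (wp E (sp E P)))).
Proof.
set Z := V `|` W.
set Z2 := V `|` Z.
have WZ : W `<=` Z by rewrite /Z; fsub.
have WZ2 : W `<=` Z2 by rewrite /Z2 /Z; fsub.
have ZZ2 : Z `<=` Z2 by rewrite /Z2 /Z; fsub.
have eZ : V `|` Z `|` W = Z by rewrite /Z; fseq.
have hI := idop_proj R W.
have [hwlpQ [swlpQ mwlpQ]] := wlp_spec HE HQ.
have [hwpQ [swpQ mwpQ]] := wp_spec HE HQ.
have [hwpI [swpI mwpI]] := wp_spec HE hI.
have [hspP [sspP mspP]] := sp_spec HE HP.
have convL : forall (T : {fset nat}) (A : op R Z2) (B : op R T),
    Z2 `|` T = Z2 -> sqle A (EO Z2 B) -> sqle A B.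
  move=> T A B e H; apply/(sqle_at _ _ e) => v.
  have := (sqle_at _ _ (fsetUid Z2)).1 H v; by rewrite !extO_id.
have convR : forall (S : {fset nat}) (A : op R S) (B : op R Z2),
    S `|` Z2 = Z2 -> sqle (EO Z2 A) B -> sqle A B.
  move=> S A B e H; apply/(sqle_at _ _ e) => v.
  have := (sqle_at _ _ (fsetUid Z2)).1 H v; by rewrite !extO_id.
split; [split|split; [|split]].
- have [h1 [s1 m1]] := sp_spec HE hwlpQ.
  have := m1 (EO Z2 Q) (extO_proj WZ2 HQ) (par_post_ext WZ2 swlpQ).
  apply: convL; rewrite /Z2 /Z; fseq.
- have [h1 [s1 m1]] := wlp_spec HE hspP.
  have := m1 (EO Z2 P) (extO_proj WZ2 HP) (par_pre_ext WZ2 sspP).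
  apply: convR; rewrite /Z2 /Z; fseq.
- move=> v; split.
    move=> hv; split.
      have := mwlpQ _ hwpQ (tot_par HE swpQ).
      move/(sqle_at _ _ (fsetUid Z)) => /(_ v); rewrite !extO_id; exact.
    have := mwpI _ hwpQ (tot_id HE HQ swpQ).
    move/(sqle_at _ _ (fsetUid Z)) => /(_ v); rewrite !extO_id; exact.
  case=> h1 h2.
  set S := fun psi : basis Z -> R[i] => app (wlp E Q) psi = psi /\ app (wp E (@idop R W)) psi = psi.
  have S0 : S (fun _ => 0).
    by split; apply: funext1 => a; rewrite /app big1 // => b _; rewrite mulr0.
  have Slin : forall k u w, S u -> S w -> S (fun a => k * u a + w a).
    move=> k u w [hu1 hu2] [hw1 hw2]; split; by rewrite app_lin ?hu1 ?hw1 ?hu2 ?hw2.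
  have [M [hM HM]] := subspace_projector S0 Slin.
  have sM : sat_tot E M Q.
    apply/(sat_tot_iff HE eZ hM HQ) => psi; rewrite extO_id => /HM [p1 p2].
    apply: Dcomb.
      by have := (sat_par_iff HE eZ hwlpQ HQ).1 swlpQ psi; rewrite extO_id; apply.
    have := (sat_tot_iff HE eZ hwpI hI).1 swpI psi; rewrite extO_id extO_idop //; apply => //.
  have := mwpQ _ hM sM.
  move/(sqle_at _ _ (fsetUid Z)) => /(_ v); rewrite !extO_id; apply.
  rewrite inrange_proj //; apply/HM; split; by apply/inrange_proj.
- have [h1 [s1 m1]] := sp_spec HE hwpQ.
  have := m1 (EO Z2 Q) (extO_proj WZ2 HQ) (par_post_ext WZ2 (tot_par HE swpQ)).
  apply: convL; rewrite /Z2 /Z; fseq.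
- move=> HPI.
  have [h1 [s1 m1]] := wp_spec HE hspP.
  have hP2 := extO_proj WZ2 HP.
  have e2 : V `|` Z2 `|` Z = Z2 by rewrite /Z2 /Z; fseq.
  have e3 : V `|` W `|` Z = Z2 by rewrite /Z2 /Z; fseq.
  have e4 : W `|` Z = Z2 by rewrite /Z2 /Z; fseq.
  have e5 : V `|` Z `|` W = Z2 by rewrite /Z2 /Z; fseq.
  have sat2 : sat_tot E (EO Z2 P) (sp E P).
    apply/(sat_tot_iff HE e2 hP2 hspP) => psi; rewrite extO_id => hpsi.
    apply: Dcomb.
      by have := (sat_par_iff HE e3 HP hspP).1 sspP psi; apply.
    have hin : app (EO Z2 (wp E (@idop R W))) psi = psi.
      have := (sqle_at _ _ e4).1 HPI psi.
      rewrite !inrange_proj //; [by apply | exact: extO_proj].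
    have := (sat_tot_iff HE e5 hwpI hI).1 swpI psi hin.
    by rewrite extO_idop.
  have := m1 _ hP2 sat2.
  apply: convR; rewrite /Z2 /Z; fseq.
Qed.
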